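(* Let $C=C_\Delta\oplus\mathbb R^{n-m}\subset\mathbb R^n$, where $C_\Delta\subset\mathbb R^m$ is an $m$-dimensional simplicial cone. Let $E_1,\dots,E_m$ be the facets of $C$. Let $\mathbf P\subset C$ be a finite lattice set with $P=\operatorname{Conv}\mathbf P$, and assume $\mathbf P\not\subset E_i$ for each $i$. Consider the off-coordinate polytopes $$D_i=\operatorname{Conv}(\mathbf P\setminus E_i)\ \ (1\le i\le m),\qquad D_i=\operatorname{Conv}(\mathbf P)\ \ (m<i\le n).$$ Then: 1. Each $D_i$ is a daughter polytope of $\mathbf P$, with $\mathcal D(D_i)=\{P\cap E_i\}$ if $P\cap E_i\neq\emptyset$ and $i\le m$, and $\mathcal D(D_i)=\emptyset$ otherwise. 2. The number of $D_i$ meeting a face $F$ of $P$ equals the dimension of the minimal face of $C$ containing $F$. 3. Consequently $D_1,\dots,D_n$ are semi-interlaced in $\mathbf P$, and their sutures are exactly the V-faces of $P$.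
   Context: **V-face.** For a polytope $P$ contained in a cone $C$, a face $F$ of $P$ is a V-face if there is a face $Q$ of $C$ with $F\subset Q$ and $\dim F=\dim Q$. **Daughter polytope.** For a nonempty polytope $D$ with vertices in $\mathbf P$, $\mathcal D(D)$ is the set of inclusion-maximal faces of $P$ disjoint from $D$. $D$ is a daughter polytope of $\mathbf P$ if: 1. distinct members of $\mathcal D(D)$ are disjoint; 2. $D=\operatorname{Conv}(\mathbf P\setminus\bigcup_{G\in\mathcal D(D)}G)$. **Semi-interlaced and sutures.** Daughter polytopes $D_1,\dots,D_n$ of $\mathbf P\subset\mathbb Z^n$ are semi-interlaced if every face $F$ of $P$ meets at least $\dim F$ of them. A suture is a face meeting exactly $\dim F$ of them. *)

(* Defs.v *)
From HB Require Import structures.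
From mathcomp Require Import all_boot all_order all_algebra.
From mathcomp Require Import boolp classical_sets reals.
Set Implicit Arguments. Unset Strict Implicit. Unset Printing Implicit Defensive.
Import Order.TTheory GRing.Theory Num.Theory.
Local Open Scope ring_scope.
Local Open Scope classical_set_scope.

Section Defs.
Variables (R : realType) (n : nat).
Notation pt := 'rV[R]_n.

Definition dotv (a x : pt) : R := \sum_(t < n) a 0 t * x 0 t.

Definition conv (s : seq pt) : set pt :=
  [set x | exists w : 'I_(size s) -> R,
      (forall i, 0 <= w i) /\ \sum_i w i = 1 /\ x = \sum_i w i *: s`_i].

(* (Nonempty) faces of a convex set K: intersections with supporting
   hyperplanes (a = 0, c = 0 gives K itself). *)
Definition face_of (K F : set pt) : Prop :=
  F !=set0 /\ exists (a : pt) (c : R),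
    (forall x, K x -> dotv a x <= c) /\ F = [set x | K x /\ dotv a x = c].

(* affdim S d : the affine hull of S has dimension d. *)
Definition affdim (S : set pt) (d : nat) : Prop :=
  (exists x : 'I_d.+1 -> pt, (forall i, S (x i)) /\
     \rank (\matrix_(i < d) (x (lift ord0 i) - x ord0)) = d) /\
  (forall x : 'I_d.+2 -> pt, (forall i, S (x i)) ->
     (\rank (\matrix_(i < d.+1) (x (lift ord0 i) - x ord0)) <= d)%N).

(* D(D): inclusion-maximal faces of P = conv PP disjoint from D. *)
Definition disj_faces (PP : seq pt) (D : set pt) : set (set pt) :=
  [set G | face_of (conv PP) G /\ G `&` D = set0 /\
     forall G', face_of (conv PP) G' -> G' `&` D = set0 -> G `<=` G' -> G' = G].

Definition daughter (PP : seq pt) (D : set pt) : Prop :=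
  D !=set0 /\ (exists s : seq pt, all (mem PP) s /\ D = conv s) /\
  (forall G1 G2, disj_faces PP D G1 -> disj_faces PP D G2 -> G1 <> G2 ->
      G1 `&` G2 = set0) /\
  D = conv [seq x <- PP | `[< ~ (exists G, disj_faces PP D G /\ G x) >]].

Definition meet_count N (D : 'I_N -> set pt) (F : set pt) : nat :=
  #|[set i : 'I_N | `[< F `&` D i !=set0 >]]|.

Definition semi_interlaced (PP : seq pt) (D : 'I_n -> set pt) : Prop :=
  (forall i, daughter PP (D i)) /\
  (forall F, face_of (conv PP) F -> forall d, affdim F d -> (d <= meet_count D F)%N).

Definition suture (PP : seq pt) (D : 'I_n -> set pt) (F : set pt) : Prop :=
  face_of (conv PP) F /\ exists d, affdim F d /\ meet_count D F = d.

Definition vface (C P F : set pt) : Prop :=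
  face_of P F /\ exists Q d, face_of C Q /\ F `<=` Q /\ affdim F d /\ affdim Q d.

End Defs.

(* C = C_Delta (+) R^k in R^(m+k), C_Delta generated by the (independent)
   rows of V : 'M_m; E j = facet {lambda_j = 0}. *)
Section Cone.
Variables (R : realType) (m k : nat) (V : 'M[R]_m).

Definition simpcone : set 'rV[R]_(m + k) :=
  [set x | exists l : 'rV[R]_m, (forall t, 0 <= l 0 t) /\ lsubmx x = l *m V].

Definition cfacet (j : 'I_m) : set 'rV[R]_(m + k) :=
  [set x | exists l : 'rV[R]_m, (forall t, 0 <= l 0 t) /\ l 0 j = 0 /\
     lsubmx x = l *m V].

Definition offcoord (PP : seq 'rV[R]_(m + k)) (i : 'I_(m + k)) : set 'rV[R]_(m + k) :=
  match split i with
  | inl j => conv [seq x <- PP | `[< ~ cfacet j x >]]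
  | inr _ => conv PP
  end.
End Cone.

(* Main.v *)
Require Import Defs.
From HB Require Import structures.
From mathcomp Require Import all_boot all_order all_algebra.
From mathcomp Require Import boolp classical_sets reals.
From mathcomp Require Import ring lra.
Import Order.TTheory GRing.Theory Num.Theory.
Local Open Scope ring_scope.
Local Open Scope classical_set_scope.

Set Implicit Arguments. Unset Strict Implicit. Unset Printing Implicit Defensive.

Lemma dotv_comb (R : realType) n p (a : 'rV[R]_n) (w : 'I_p -> R) (s : 'I_p -> 'rV[R]_n) :
  dotv a (\sum_i w i *: s i) = \sum_i w i * dotv a (s i).
Proof.
rewrite /dotv.
under eq_bigr => t _ do rewrite summxE big_distrr /=.
rewrite exchange_big /=; apply: eq_bigr => i _.
rewrite big_distrr /=; apply: eq_bigr => t _; rewrite mxE; ring.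
Qed.

Lemma dotvE (R : realType) n (a x : 'rV[R]_n) : dotv a x = (x *m a^T) 0 0.
Proof. by rewrite /dotv mxE; apply: eq_bigr => t _; rewrite mxE mulrC. Qed.

Lemma rank_rowsub1 (R : realType) p q (f : 'I_p -> 'I_q) :
  injective f -> \rank (rowsub f (1%:M : 'M[R]_q)) = p.
Proof.
move=> fi; apply/eqP; rewrite eqn_leq rank_leq_row /=.
have E : (1%:M : 'M[R]_p) = rowsub f 1%:M *m (rowsub f 1%:M)^T.
  apply/matrixP => i j; rewrite !mxE.
  rewrite (bigD1 (f i)) //= big1 => [|t /negbTE ht].
    rewrite !mxE eqxx addr0 mul1r (inj_eq fi); by rewrite eq_sym.
  by rewrite !mxE (eq_sym (f i)) ht mul0r.
rewrite -[leqLHS](mxrank1 R p) E; exact: mxrankM_maxl.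
Qed.

Lemma affdim_mono (R : realType) n (S T : set 'rV[R]_n) d c :
  S `<=` T -> affdim S d -> affdim T c -> (d <= c)%N.
Proof.
move=> ST [[x [xS rk]] _] [_ hT]; rewrite leqNgt; apply/negP => lt.
have h1 : (c.+2 <= d.+1)%N by [].
have h2 : (c.+1 <= d)%N by [].
have := hT (fun i => x (widen_ord h1 i)) (fun i => ST _ (xS _)).
have -> : (\matrix_(i < c.+1) (x (widen_ord h1 (lift ord0 i)) - x (widen_ord h1 ord0)))
   = rowsub (widen_ord h2) (\matrix_(i < d) (x (lift ord0 i) - x ord0)).
  apply/matrixP => i j; rewrite !mxE.
  have -> : widen_ord h1 (lift ord0 i) = lift ord0 (widen_ord h2 i) by apply: val_inj.
  by have -> : widen_ord h1 ord0 = ord0 by apply: val_inj.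
rewrite rowsubE mxrankMfree; last by rewrite /row_free rk.
by rewrite rank_rowsub1 ?ltnn //; by move=> a b /(congr1 val) /= /val_inj.
Qed.


Section Cone.
Variables (R : realType) (m k : nat) (V : 'M[R]_m).
Hypothesis hV : V \in unitmx.
Notation pt := 'rV[R]_(m + k).

Definition Minv : 'M[R]_(m + k) := block_mx (invmx V) 0 0 1%:M.
Definition Mfw : 'M[R]_(m + k) := block_mx V 0 0 1%:M.
Definition lamv (x : pt) : 'rV[R]_m := lsubmx x *m invmx V.
Definition lam j (x : pt) := lamv x 0 j.

Lemma xMinv x : x *m Minv = row_mx (lamv x) (rsubmx x).
Proof.
by rewrite -{1}(hsubmxK x) /Minv mul_row_block !mulmx0 addr0 add0r mulmx1.
Qed.

Lemma lamE j x : lam j x = (x *m Minv) 0 (lshift k j).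
Proof. by rewrite xMinv row_mxEl. Qed.

Lemma Mfw_Minv : Mfw *m Minv = 1%:M.
Proof.
rewrite /Mfw /Minv mulmx_block !mulmx0 !mul0mx !addr0 !add0r mulmx1 mulmxV //.
by rewrite ?mul1mx [RHS]scalar_mx_block.
Qed.

Lemma Minv_Mfw : Minv *m Mfw = 1%:M.
Proof.
rewrite /Mfw /Minv mulmx_block !mulmx0 !mul0mx !addr0 !add0r mulmx1 mulVmx //.
by rewrite ?mul1mx [RHS]scalar_mx_block.
Qed.

Lemma Mfw_unit : Mfw \in unitmx.
Proof. by case: (mulmx1_unit Mfw_Minv). Qed.

Lemma lamv_Mfw y : lamv (y *m Mfw) = lsubmx y.
Proof.
rewrite /lamv -{1}(hsubmxK y) /Mfw mul_row_block !mulmx0 addr0 row_mxKl.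
by rewrite mulmxK.
Qed.

Lemma simpconeP x : (@simpcone R m k V) x <-> forall j, 0 <= lam j x.
Proof.
split.
  case=> l [l0 e] j; rewrite /lam /lamv e mulmxK //.
move=> h; exists (lamv x); split => // ; by rewrite /lamv mulmxKV.
Qed.

Lemma cfacetP j x : cfacet V j x <-> (@simpcone R m k V) x /\ lam j x = 0.
Proof.
split.
  case=> l [l0 [lj e]]; split; first by exists l.
  by rewrite /lam /lamv e mulmxK.
case=> /simpconeP h hj; exists (lamv x); split => //; split => //.
by rewrite /lamv mulmxKV.
Qed.

Lemma dotv_split (a x : pt) :
  dotv a x = dotv (lsubmx a) (lsubmx x) + dotv (rsubmx a) (rsubmx x).
Proof. by rewrite /dotv big_split_ord /=; congr (_ + _); apply: eq_bigr => t _; rewrite !mxE. Qed.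

Lemma dotvM p q (a : 'rV[R]_q) (u : 'rV[R]_p) (B : 'M[R]_(p, q)) :
  dotv a (u *m B) = dotv (a *m B^T) u.
Proof. by rewrite !dotvE trmx_mul trmxK mulmxA. Qed.

Lemma dotv_cone (a x : pt) :
  dotv a x = dotv (lsubmx a *m V^T) (lamv x) + dotv (rsubmx a) (rsubmx x).
Proof. by rewrite dotv_split -dotvM /lamv mulmxKV. Qed.

Lemma dotv_delta p (a : 'rV[R]_p) (s : R) t : dotv a (s *: delta_mx 0 t) = s * a 0 t.
Proof.
rewrite /dotv (bigD1 t) //= big1 => [|i /negbTE hi]; last by rewrite !mxE hi andbF mulr0 mulr0.
by rewrite !mxE !eqxx mulr1 addr0 mulrC.
Qed.

Lemma dotv0 p (a : 'rV[R]_p) : dotv a 0 = 0.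
Proof. by rewrite /dotv big1 // => t _; rewrite mxE mulr0. Qed.

Lemma dotv_np p (g u : 'rV[R]_p) : (forall j, g 0 j <= 0) -> (forall j, 0 <= u 0 j) ->
  dotv g u <= 0.
Proof.
move=> hg hu; rewrite /dotv; apply: sumr_le0 => j _.
by rewrite mulr_le0_ge0.
Qed.

Lemma dotv_np0 p (g u : 'rV[R]_p) : (forall j, g 0 j <= 0) -> (forall j, 0 <= u 0 j) ->
  dotv g u = 0 <-> forall j, g 0 j != 0 -> u 0 j = 0.
Proof.
move=> hg hu; split.
  move=> h0 j gj.
  have h1 : \sum_(t < p) - (g 0 t * u 0 t) = 0 by rewrite sumrN -/(dotv g u) h0 oppr0.
  have hp : forall t : 'I_p, true -> 0 <= - (g 0 t * u 0 t).
    by move=> t _; rewrite oppr_ge0 mulr_le0_ge0.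
  have := @psumr_eq0P _ _ _ _ hp h1 j isT.
  by move/eqP; rewrite oppr_eq0 mulf_eq0 (negbTE gj) => /eqP.
move=> h; rewrite /dotv big1 // => j _.
by have [/eqP->|gj] := boolP (g 0 j == 0); [rewrite mul0r | rewrite h ?mulr0].
Qed.


Lemma dotv0l p (u : 'rV[R]_p) : dotv 0 u = 0.
Proof. by rewrite /dotv big1 // => t _; rewrite mxE mul0r. Qed.

Lemma lam0 j : lam j 0 = 0.
Proof. by rewrite lamE mul0mx mxE. Qed.

Lemma simpcone0 : (@simpcone R m k V) 0.
Proof. by apply/simpconeP => j; rewrite lam0. Qed.

Definition Qf (S : {set 'I_m}) : set pt :=
  [set x | (@simpcone R m k V) x /\ forall j, j \in S -> lam j x = 0].

Definition tp (u : 'rV[R]_m) (r : 'rV[R]_k) : pt := row_mx (u *m V) r.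

Lemma lamv_tp (u : 'rV[R]_m) (r : 'rV[R]_k) : lamv (tp u r) = u.
Proof. by rewrite /lamv /tp row_mxKl mulmxK. Qed.

Lemma dotv_tp (a : pt) (u : 'rV[R]_m) (r : 'rV[R]_k) : dotv a (tp u r) = dotv (lsubmx a *m V^T) u + dotv (rsubmx a) r.
Proof. by rewrite dotv_cone lamv_tp /tp row_mxKr. Qed.

Lemma simpcone_tp (u : 'rV[R]_m) (r : 'rV[R]_k) : (forall j, 0 <= u 0 j) -> (@simpcone R m k V) (tp u r).
Proof. by move=> h; apply/simpconeP => j; rewrite /lam lamv_tp. Qed.

Lemma Qf_face S : face_of ((@simpcone R m k V)) (Qf S).
Proof.
split; first by exists 0; split; [exact: simpcone0 | move=> j _; exact: lam0].
pose g : 'rV[R]_m := \row_j (if j \in S then -1 else 0).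
have hg : forall j, g 0 j <= 0 by move=> j; rewrite mxE; case: (j \in S); rewrite ?lerN10.
have hV' : V^T \in unitmx by rewrite unitmx_tr.
pose a : pt := row_mx (g *m invmx V^T) 0.
have ha : forall x, dotv a x = dotv g (lamv x).
  by move=> x; rewrite dotv_cone row_mxKl row_mxKr mulmxKV // dotv0l addr0.
exists a, 0; split.
  by move=> x /simpconeP hx; rewrite ha; apply: dotv_np => // j; exact: hx.
rewrite predeqE => x; split.
  case=> hx hS; split => //; rewrite ha; apply/dotv_np0 => //.
    by move=> j; move/simpconeP: hx; apply.
  move=> j; rewrite mxE; case: ifP => jS; [move=> _; exact: hS | by rewrite eqxx].
case=> hx; rewrite ha => /dotv_np0 h; split => // j jS.
apply: h => //; first by move=> t; move/simpconeP: hx; apply.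
by rewrite mxE jS oppr_eq0 oner_eq0.
Qed.

Lemma face_Qf Q : face_of ((@simpcone R m k V)) Q -> exists S, Q = Qf S.
Proof.
case=> [[x0 Qx0] [a [c [hle eQ]]]].
pose g := lsubmx a *m V^T.
have c0 : 0 <= c by have := hle 0 simpcone0; rewrite dotv0.
have hb : rsubmx a = 0.
  apply/rowP => t; rewrite [RHS]mxE; apply/eqP/contraT => bt; exfalso.
  pose s := (c + 1) / rsubmx a 0 t.
  have Ct : (@simpcone R m k V) (tp 0 (s *: delta_mx 0 t)).
    by apply: simpcone_tp => j; rewrite mxE.
  have := hle _ Ct.
  rewrite dotv_tp dotv0 add0r dotv_delta /s mulfVK // => h.
  by move: h; lra.
have hg : forall j, g 0 j <= 0.
  move=> j; rewrite leNgt; apply/negP => gj.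
  pose s := (c + 1) / g 0 j.
  have s0 : 0 <= s by rewrite /s divr_ge0 //; [lra | exact: ltW].
  have Ct : (@simpcone R m k V) (tp (s *: delta_mx 0 j) 0).
    by apply: simpcone_tp => t; rewrite !mxE mulr_ge0 // ler0n.
  have := hle _ Ct.
  rewrite dotv_tp dotv0 addr0 dotv_delta /s mulfVK ?gt_eqF // => h.
  by move: h; lra.
have hx : forall x, dotv a x = dotv g (lamv x).
  by move=> x; rewrite dotv_cone hb dotv0l addr0.
have hlam : forall x, (@simpcone R m k V) x -> forall j, 0 <= lamv x 0 j.
  by move=> x /simpconeP h j; exact: h.
have cE : c = 0.
  move: Qx0; rewrite eQ => -[Cx0 e]; apply/eqP; rewrite eq_le c0 andbT -e hx.
  exact: dotv_np hg (hlam _ Cx0).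
exists [set j : 'I_m | g 0 j != 0]%SET; rewrite eQ cE predeqE => x; split.
  case=> Cx; rewrite hx => /dotv_np0 h; split => // j.
  by rewrite inE => gj; apply: h => //; exact: hlam.
case=> Cx hS; split => //; rewrite hx; apply/dotv_np0 => //; first exact: hlam.
by move=> j gj; apply: hS; rewrite inE.
Qed.

End Cone.


Lemma proj_id (R : realType) p n (T : {set 'I_n}) (B : 'M[R]_(p, n)) :
  (forall r c, c \notin T -> B r c = 0) ->
  B = B *m (rowsub (fun i : 'I_#|T| => enum_val i) 1%:M)^T
        *m rowsub (fun i : 'I_#|T| => enum_val i) 1%:M.
Proof.
move=> hB; apply/matrixP => r c; rewrite !mxE.
under eq_bigr => i _.
  rewrite !mxE (bigD1 (enum_val i)) //= big1 => [|t /negbTE ht]; last first.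
    by rewrite !mxE eq_sym ht mulr0.
  rewrite !mxE eqxx mulr1 addr0.
over.
have [cT|cT] := boolP (c \in T).
  rewrite (bigD1 (enum_rank_in cT c)) //= enum_rankK_in // eqxx mulr1 big1 ?addr0 //.
  move=> i hi; case: eqP => [e|_]; last by rewrite mulr0.
  have ei : i = enum_rank_in cT c by apply: enum_val_inj; rewrite enum_rankK_in.
  by move: hi; rewrite ei eqxx.
rewrite hB // big1 // => i _; case: eqP => [e|_]; last by rewrite mulr0.
by move: cT; rewrite -e enum_valP.
Qed.

Section Dim.
Variables (R : realType) (m k : nat) (V : 'M[R]_m).
Hypothesis hV : V \in unitmx.
Notation pt := 'rV[R]_(m + k).

Definition inT (S : {set 'I_m}) (i : 'I_(m + k)) : bool :=
  match split i with inl j => j \notin S | inr _ => true end.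
Definition TS S := [set i | inT S i]%SET.

Lemma inT_lshift S j : inT S (lshift k j) = (j \notin S).
Proof. by rewrite /inT -[lshift k j]/(unsplit (inl j)) unsplitK. Qed.

Lemma inT_rshift S t : inT S (rshift m t) = true.
Proof. by rewrite /inT -[rshift m t]/(unsplit (inr t)) unsplitK. Qed.

Lemma affdim_Qf S : affdim (Qf (k:=k) V S) #|TS S|.
Proof.
pose f := fun i : 'I_#|TS S| => enum_val i.
have finj : injective f by exact: enum_val_inj.
split.
  pose x := fun i : 'I_#|TS S|.+1 =>
     if unlift ord0 i is Some i' then delta_mx 0 (f i') *m Mfw k V else 0 : pt.
  exists x; split.
    move=> i; rewrite /x; case: (unlift ord0 i) => [i'|].
      split.
        apply/simpconeP => // j; rewrite /lam lamv_Mfw // !mxE; exact: ler0n.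
      move=> j jS; rewrite /lam lamv_Mfw // !mxE /=.
      case: eqP => // e; have := enum_valP i'; rewrite -/(f i') -e inE inT_lshift jS //=.
    by split; [exact: simpcone0 | move=> j _; exact: lam0].
  have -> : \matrix_(i < #|TS S|) (x (lift ord0 i) - x ord0) = rowsub f 1%:M *m Mfw k V.
    apply/row_matrixP => i; rewrite rowK /x liftK unlift_none subr0 -rowsubE.
    by rewrite row_rowsub rowE.
  rewrite mxrankMfree ?rank_rowsub1 // row_free_unit; exact: Mfw_unit.
move=> y yQ.
set A := \matrix_(i < #|TS S|.+1) (y (lift ord0 i) - y ord0).
have hB : forall r c, c \notin TS S -> (A *m Minv k V) r c = 0.
  move=> r c; rewrite inE -(splitK c); case: (split c) => [j|t] /=; last first.
    by rewrite -/(inT S (rshift m t)) inT_rshift.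
  rewrite -/(inT S (lshift k j)) inT_lshift negbK => jS.
  have -> : (A *m Minv k V) r (lshift k j) = (row r A *m Minv k V) 0 (lshift k j).
    by rewrite -row_mul [RHS]mxE.
  have hsub : forall (B1 B2 : pt) c, (B1 - B2) 0 c = B1 0 c - B2 0 c by move=> *; rewrite !mxE.
  rewrite rowK mulmxBl hsub -!lamE.
  by rewrite (proj2 (yQ (lift ord0 r)) j jS) (proj2 (yQ ord0) j jS) subrr.
have e1 : A = A *m Minv k V *m Mfw k V by rewrite -mulmxA Minv_Mfw ?mulmx1.
rewrite e1; apply: leq_trans (mxrankM_maxl _ _) _.
rewrite (proj_id hB); apply: leq_trans (mxrankM_maxr _ _) _.
exact: rank_leq_row.
Qed.

End Dim.


Section Poly.
Variables (R : realType) (n : nat).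
Notation pt := 'rV[R]_n.

Lemma conv_mem (s : seq pt) x : x \in s -> conv s x.
Proof.
move=> xs; have hi : (index x s < size s)%N by rewrite index_mem.
pose i0 := Ordinal hi.
exists (fun i => (i == i0)%:R); split; first by move=> i; exact: ler0n.
split.
  by rewrite (bigD1 i0) //= eqxx big1 ?addr0 // => i /negbTE ->.
rewrite (bigD1 i0) //= eqxx scale1r big1 ?addr0 ?nth_index //.
by move=> i /negbTE ->; rewrite scale0r.
Qed.

Lemma face_sub (K F : set pt) : face_of K F -> F `<=` K.
Proof. by case=> _ [a [c [_ ->]]] x []. Qed.

Lemma face_pts (s : seq pt) F (w : 'I_(size s) -> R) :
  face_of (conv s) F -> (forall i, 0 <= w i) -> \sum_i w i = 1 ->
  F (\sum_i w i *: s`_i) -> forall i, 0 < w i -> F s`_i.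
Proof.
case=> _ [a [c [hle eF]]] w0 w1; rewrite eF => -[_ e] i wi.
have hs : forall i : 'I_(size s), dotv a s`_i <= c.
  by move=> t; apply: hle; apply: conv_mem; exact: mem_nth.
have hz : \sum_t w t * (c - dotv a s`_t) = 0.
  under eq_bigr => t _ do rewrite mulrBr.
  by rewrite sumrB -big_distrl /= w1 mul1r -dotv_comb e subrr.
have hp : forall t : 'I_(size s), true -> 0 <= w t * (c - dotv a s`_t).
  by move=> t _; rewrite mulr_ge0 // subr_ge0.
have := @psumr_eq0P _ _ _ _ hp hz i isT.
move/eqP; rewrite mulf_eq0 gt_eqF //= subr_eq0 => /eqP ec.
split => //; apply: conv_mem; exact: mem_nth.
Qed.

Lemma comb_pos (s : seq pt) (a : pt) (w : 'I_(size s) -> R) :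
  (forall i, 0 <= w i) -> \sum_i w i = 1 -> (forall i : 'I_(size s), 0 < dotv a s`_i) ->
  0 < dotv a (\sum_i w i *: s`_i).
Proof.
move=> w0 w1 hp; rewrite dotv_comb lt_def sumr_ge0 ?andbT; last first.
  by move=> i _; rewrite mulr_ge0 // ltW.
apply/eqP => h0.
have := @psumr_eq0P _ _ _ _ (fun i _ => mulr_ge0 (w0 i) (ltW (hp i))) h0.
move=> h; move: w1; rewrite big1 => [|i _]; first by move/eqP; rewrite eq_sym oner_eq0.
by have /eqP := h i isT; rewrite mulf_eq0 (gt_eqF (hp i)) orbF => /eqP.
Qed.

End Poly.

Lemma meet_countE (R : realType) n N (D : 'I_N -> set 'rV[R]_n) F :
  meet_count D F = #|[pred i | `[< F `&` D i !=set0 >]]|.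
Proof.
apply: eq_card => i; rewrite !inE /=.
apply/idP/idP => [/asboolP|h]; first by [].
by apply/asboolP.
Qed.


Section Main.
Variables (R : realType) (m k : nat) (V : 'M[R]_m).
Hypothesis hV : V \in unitmx.
Notation pt := 'rV[R]_(m + k).
Notation C := (@simpcone R m k V).
Notation E := (@cfacet R m k V).
Variable PP : seq pt.
Hypothesis hPP : forall x, x \in PP -> C x.

Definition alam j : pt := (col (lshift k j) (Minv k V))^T.

Lemma lam_dot j x : lam V j x = dotv (alam j) x.
Proof. by rewrite dotvE trmxK lamE !mxE; apply: eq_bigr => t _; rewrite !mxE. Qed.

Definition Dj j := conv [seq x <- PP | `[< ~ E j x >]].

Lemma conv_cone : conv PP `<=` C.
Proof.
move=> x [w [w0 [w1 ->]]]; apply/simpconeP => // j.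
rewrite lam_dot dotv_comb; apply: sumr_ge0 => i _; rewrite mulr_ge0 // -lam_dot.
by move/simpconeP: (hPP (mem_nth 0 (ltn_ord i))); apply.
Qed.

Lemma lam_pos j x : C x -> ~ E j x -> 0 < lam V j x.
Proof.
move=> Cx nE; rewrite lt_def; move/simpconeP: (Cx) => /(_ hV j) ->; rewrite andbT.
by apply/eqP => h; apply: nE; apply/cfacetP.
Qed.

Lemma Dj_pos j y : Dj j y -> 0 < lam V j y.
Proof.
case=> w [w0 [w1 ->]]; rewrite lam_dot; apply: comb_pos => // i.
have := mem_nth 0 (ltn_ord i); rewrite mem_filter => /andP [/asboolP nE xP].
by rewrite -lam_dot; apply: lam_pos => //; exact: hPP.
Qed.

Lemma meet_iff j F : face_of (conv PP) F ->
  (F `&` Dj j !=set0 <-> ~ F `<=` E j).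
Proof.
move=> Ff; split.
  case=> y [Fy Dy] FE; have := Dj_pos Dy.
  by case/cfacetP: (FE _ Fy) => // _ ->; rewrite ltxx.
move=> nFE; apply: contrapT => hn; apply: nFE => x Fx; apply: contrapT => nEx.
have Px := face_sub Ff Fx.
have lx := lam_pos (conv_cone Px) nEx.
case: Px => w [w0 [w1 ex]].
have : [exists i, w i * lam V j PP`_i != 0].
  apply: contraT => /existsPn h.
  move: lx; rewrite ex lam_dot dotv_comb big1 ?ltxx // => i _.
  by rewrite -lam_dot; move/negPn/eqP: (h i).
case/existsP => i; rewrite mulf_eq0 negb_or => /andP [wi li].
have wp : 0 < w i by rewrite lt_def wi w0.
have Fi : F PP`_i by apply: (face_pts Ff w0 w1) => //; rewrite -ex.
apply: hn; exists PP`_i; split => //; apply: conv_mem.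
rewrite mem_filter mem_nth // andbT; apply/asboolP => /cfacetP [] // _ /eqP.
by rewrite (negbTE li).
Qed.

Definition PE j := conv PP `&` E j.

Lemma dotvNl p (a u : 'rV[R]_p) : dotv (- a) u = - dotv a u.
Proof. by rewrite /dotv -sumrN; apply: eq_bigr => t _; rewrite mxE mulNr. Qed.

Lemma PE_face j : PE j !=set0 -> face_of (conv PP) (PE j).
Proof.
move=> ne; split => //; exists (- alam j), 0; split.
  move=> x /conv_cone /simpconeP h; rewrite dotvNl -lam_dot oppr_le0; exact: h.
rewrite predeqE => x; split.
  by case=> Px /cfacetP [] // _ e; split => //; rewrite dotvNl -lam_dot e oppr0.
case=> Px; rewrite dotvNl -lam_dot => /eqP; rewrite oppr_eq0 => /eqP e.
split => //; apply/cfacetP => //; split => //; exact: conv_cone.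
Qed.

Lemma face_in_E j G : face_of (conv PP) G -> G `&` Dj j = set0 -> G `<=` E j.
Proof.
move=> Gf hG; apply: contrapT => nG; have [y hy] := (meet_iff j Gf).2 nG.
by move: hy; rewrite hG.
Qed.

Lemma PE_disj j : PE j `&` Dj j = set0.
Proof.
rewrite predeqE => y; split => // -[[_ Ey] Dy]; have := Dj_pos Dy.
by case/cfacetP: Ey => // _ ->; rewrite ltxx.
Qed.

Lemma disjE j : disj_faces PP (Dj j) =
  if `[< PE j !=set0 >] then [set PE j] else set0.
Proof.
case: asboolP => ne; rewrite predeqE => G; split.
- case=> Gf [GD Gmax]; apply/esym; apply: Gmax; [exact: PE_face | exact: PE_disj |].
  move=> x Gx; split; [exact: face_sub Gf _ Gx | exact: face_in_E Gf GD _ Gx].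
- move=> ->; split; first exact: PE_face.
  split; first exact: PE_disj.
  move=> G' G'f G'D sub; rewrite eqEsubset; split => // x G'x.
  split; [exact: face_sub G'f _ G'x | exact: face_in_E G'f G'D _ G'x].
- case=> Gf [GD _]; apply: ne; case: (Gf) => [[x Gx] _].
  exists x; split; [exact: face_sub Gf _ Gx | exact: face_in_E Gf GD _ Gx].
- by [].
Qed.

Lemma daughter_Dj j : ~ (forall x, x \in PP -> E j x) -> daughter PP (Dj j).
Proof.
move=> hj.
have [x0 [x0P nE0]] : exists x, x \in PP /\ ~ E j x.
  apply: contrapT => h; apply: hj => x xP; apply: contrapT => nx; apply: h; by exists x.
split; first by exists x0; apply: conv_mem; rewrite mem_filter x0P andbT; apply/asboolP.
split.
  exists [seq x <- PP | `[< ~ E j x >]]; split => //.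
  by apply/allP => x; rewrite mem_filter => /andP[].
split.
  move=> G1 G2; rewrite disjE; case: asboolP => _ //.
  by move=> h1 h2 ne12; exfalso; apply: ne12; rewrite (h1 : G1 = PE j) (h2 : G2 = PE j).
rewrite disjE {1}/Dj; congr (conv _); apply: eq_in_filter => x xP.
case: (asboolP (PE j !=set0)) => ne.
  apply/idP/idP => /asboolP h; apply/asboolP.
    by move=> [G [hG Gx]]; move: Gx; rewrite (hG : G = PE j) => -[_ Ex].
  move=> Ex; apply: h; exists (PE j); split => //; split => //; exact: conv_mem.
apply/idP/idP => /asboolP h; apply/asboolP; first by move=> [G [[]]].
move=> Ex; apply: ne; exists x; split => //; exact: conv_mem.
Qed.

Lemma disjP0 : disj_faces PP (conv PP) = set0.
Proof.
rewrite predeqE => G; split => // -[Gf [GD _]]; case: (Gf) => [[x Gx] _].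
have : (G `&` conv PP) x by split; [|exact: face_sub Gf _ Gx].
by rewrite GD.
Qed.

Lemma daughter_P : PP != [::] -> daughter PP (conv PP).
Proof.
move=> ne; have x0P : head 0 PP \in PP by case: PP ne => // a s _; rewrite inE eqxx.
split; first by exists (head 0 PP); exact: conv_mem.
split; first by exists PP; split => //; apply/allP.
split; first by rewrite disjP0 => G1 G2 [].
rewrite disjP0; congr (conv _); apply/esym/all_filterP/allP => x _.
by apply/asboolP => -[G [[]]].
Qed.

Definition Sof (F : set pt) := [set j : 'I_m | `[< F `<=` E j >]]%SET.

Lemma count_eq F : face_of (conv PP) F ->
  meet_count (offcoord V PP) F = #|TS k (Sof F)|.
Proof.
move=> Ff; rewrite meet_countE; apply: eq_card => i; rewrite !inE /= /inT /offcoord.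
case: (split i) => [j|t].
  rewrite inE; apply/idP/idP => [/asboolP h|h].
    by apply/negP => /asboolP; exact: (meet_iff j Ff).1 h.
  apply/asboolP; apply/(meet_iff j Ff) => hF; move/negP: h; apply; exact/asboolP.
apply/asboolP; case: (Ff) => [[x Fx] _]; exists x; split => //; exact: face_sub Ff _ Fx.
Qed.

Lemma F_Q0 F : face_of (conv PP) F -> F `<=` Qf V (Sof F).
Proof.
move=> Ff x Fx; have Cx := conv_cone (face_sub Ff Fx); split => // j.
rewrite inE => /asboolP FE; by case/cfacetP: (FE _ Fx).
Qed.

Lemma Q0_min F Q : face_of C Q -> F `<=` Q -> Qf V (Sof F) `<=` Q.
Proof.
move=> QC FQ; have [S' eQ] := face_Qf hV QC; rewrite eQ.
move=> x [Cx hx]; split => // j jS'; apply: hx; rewrite inE; apply/asboolP => y Fy.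
have := FQ _ Fy; rewrite eQ => -[Cy hy]; apply/cfacetP => //; split => //; exact: hy.
Qed.

End Main.

Unset Implicit Arguments.

Theorem mainTheorem8 (R : realType) (m k : nat) (V : 'M[R]_m)
  (PP : seq 'rV[R]_(m + k)) :
  V \in unitmx ->
  PP != [::] ->
  (forall x, x \in PP -> forall t, x 0 t \is a Num.int) ->
  (forall x, x \in PP -> @simpcone R m k V x) ->
  (forall j : 'I_m, ~ (forall x, x \in PP -> @cfacet R m k V j x)) ->
  let C := @simpcone R m k V in
  let P := conv PP in
  let D := offcoord V PP in
  (* 1 *)
  (forall i, daughter PP (D i) /\
     disj_faces PP (D i) =
       match split i with
       | inl j => if `[< P `&` @cfacet R m k V j !=set0 >]
                  then [set P `&` @cfacet R m k V j] else set0
       | inr _ => set0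
       end) /\
  (* 2 *)
  (forall F, face_of P F ->
     let minface Q := face_of C Q /\ F `<=` Q /\
        (forall Q', face_of C Q' -> F `<=` Q' -> Q' `<=` Q -> Q' = Q) in
     (exists Q, minface Q) /\
     (forall Q, minface Q -> affdim Q (meet_count D F))) /\
  (* 3 *)
  semi_interlaced PP D /\
  (forall F, suture PP D F <-> vface C P F).
Proof.
move=> hV hne _ hPP hfac C P D.
have part1 : forall i, daughter PP (D i) /\
     disj_faces PP (D i) =
       match split i with
       | inl j => if `[< P `&` @cfacet R m k V j !=set0 >]
                  then [set P `&` @cfacet R m k V j] else set0
       | inr _ => set0
       end.
  move=> i; rewrite /D /offcoord; case: (split i) => [j|t].
    split; [exact: (daughter_Dj hV hPP (hfac j)) | exact: (disjE hV hPP j)].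
  split; [exact: daughter_P | exact: disjP0].
have AQ : forall (F : set 'rV[R]_(m + k)), affdim (Qf (k:=k) V (Sof V F)) #|TS k (Sof V F)|.
  move=> F; exact: (affdim_Qf k hV).
split => //.
split.
  move=> F Ff minface; split.
    exists (Qf (k:=k) V (Sof V F)); split; first exact: (Qf_face k hV).
    split; first exact: (F_Q0 hV hPP Ff).
    move=> Q' Q'f FQ' sub; rewrite eqEsubset; split => //; exact: (Q0_min hV Q'f FQ').
  move=> Q [QC [FQ Qmin]].
  have e : Qf (k:=k) V (Sof V F) = Q.
    apply: Qmin; [exact: (Qf_face k hV) | exact: (F_Q0 hV hPP Ff) | exact: (Q0_min hV QC FQ)].
  by rewrite -e (count_eq hV hPP Ff).
split.
  split; first by move=> i; case: (part1 i).
  move=> F Ff d aF; rewrite (count_eq hV hPP Ff).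
  exact: (affdim_mono (F_Q0 hV hPP Ff) aF (AQ F)).
move=> F; split.
  case=> Ff [d [aF cnt]]; split => //; exists (Qf (k:=k) V (Sof V F)), d.
  split; first exact: (Qf_face k hV).
  split; first exact: (F_Q0 hV hPP Ff).
  by split => //; rewrite -cnt (count_eq hV hPP Ff).
case=> Ff [Q [d [QC [FQ [aF aQ]]]]]; split => //; exists d; split => //.
rewrite (count_eq hV hPP Ff); apply/eqP; rewrite eqn_leq; apply/andP; split.
  exact: (affdim_mono (Q0_min hV QC FQ) (AQ F) aQ).
exact: (affdim_mono (F_Q0 hV hPP Ff) aF (AQ F)).
Qed.
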